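(* Let $p\ge5$ and consider the white metallic tree $\mathcal W_\pi$ under the penultimate assignment. Let $\nu$ be any node, let $u$ be its metallic code and let $w$ be the metallic code of $\nu-1$ (the empty word if $\nu=1$). Then: (i) if $\nu$ is black, the signature of $\nu$ is $0$, and its $p-3$ sons, in increasing order, have metallic codes $w\,(h+1)$ for $h=1,\dots,p-5$ (the code $w$ followed by the digit $h+1$), then $u\,0$, then $u\,1$; (ii) if $\nu$ is white, the signature of $\nu$ is nonzero, and its $p-2$ sons, in increasing order, have metallic codes $w\,(h+1)$ for $h=1,\dots,p-4$, then $u\,0$, then $u\,1$. In particular, in both cases the black son $u\,0$ has signature $0$ and the sons other than $u0,u1$ have signatures $2,3,\dots$ in increasing order.
   Context: Fix $p\ge5$. Metallic numbers: $m_{-1}=0$, $m_0=1$, $m_{n+2}=(p-2)m_{n+1}-m_n$. With $d=p-3$, $c=p-4$, the metallic code of a positive integer $n$ is the unique word $a_k\cdots a_0$ over $\{0,\dots,p-3\}$ with $a_k\ne0$, $n=\sum a_im_i$, containing no factor $d\,c^j\,d$ ($j\ge0$); the code of $0$ is the empty word; the signature of $n$ is its last digit $a_0$; $w\,e$ denotes the word $w$ followed by the digit $e$. White metallic tree under an assignment $\alpha$, $\mathcal W_\alpha$: its nodes are the positive integers, each black or white; the root $1$ is white; nodes are processed in increasing order, and node $\nu$ receives $p-2$ sons if white and $p-3$ sons if black, these sons being the smallest integers not yet used, in increasing order; the assignment specifies for each node the position (among its sons, the leftmost having position $1$) of its unique black son, all other sons being white. The penultimate assignment $\pi$ puts the black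 son at the penultimate position (position $p-3$ for a white node, $p-4$ for a black node). *)

(* Defs.v *)
From mathcomp Require Import all_boot.
Set Implicit Arguments. Unset Strict Implicit. Unset Printing Implicit Defensive.

(* Metallic numbers: metal p i = m_i for i >= 0 (m_{-1} = 0, m_0 = 1,
   m_{n+2} = (p-2) m_{n+1} - m_n; hence m_1 = p-2).  For p >= 5 the sequence
   is increasing, so truncated nat subtraction is exact. *)
Fixpoint metal (p i : nat) : nat :=
  match i with
  | 0 => 1
  | 1 => p - 2
  | (i'.+1 as j).+1 => (p - 2) * metal p j - metal p i'
  end.

(* Words are written most significant digit first: [:: a_k; ...; a_0]. *)
Definition mvalue (p : nat) (w : seq nat) : nat :=
  \sum_(i < size w) nth 0 (rev w) i * metal p i.

(* w contains a factor d c^j d with d = p-3, c = p-4 *)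
Definition has_forbidden (p : nat) (w : seq nat) : Prop :=
  exists j, infix ((p - 3) :: nseq j (p - 4) ++ [:: p - 3]) w.

Definition is_mcode (p n : nat) (w : seq nat) : Prop :=
  [/\ all (fun a => a <= p - 3) w,
      (w == [::]) || (head 0 w != 0),
      mvalue p w = n
    & ~ has_forbidden p w].

Definition signature (w : seq nat) : nat := last 0 w.

(* Colours: true = black, false = white.  Node numbers are 1-based;
   the list [build p k] holds the colours of nodes 1,2,... assigned after
   nodes 1..k have been processed. *)
Definition nb_sons (p : nat) (black : bool) : nat :=
  if black then p - 3 else p - 2.

Definition sons_colors (p : nat) (black : bool) : seq bool :=
  [seq (i == (nb_sons p black) - 2) | i <- iota 0 (nb_sons p black)].

Fixpoint build (p k : nat) : seq bool :=
  match k with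
  | 0 => [:: false]
  | k'.+1 => let s := build p k' in s ++ sons_colors p (nth false s k')
  end.

Definition is_black (p nu : nat) : bool := nth false (build p nu) nu.-1.

Definition first_son (p nu : nat) : nat := (size (build p nu.-1)).+1.

(* the son of nu at position i (leftmost position is 1) *)
Definition son (p nu i : nat) : nat := first_son p nu + i.-1.

Definition nsons (p nu : nat) : nat := nb_sons p (is_black p nu).

(* Main.v *)
Require Import Defs.
From mathcomp Require Import all_boot zify.
Set Warnings "-notation-overridden".

Lemma metal_SS p k : metal p k.+2 = (p - 2) * metal p k.+1 - metal p k.
Proof. by []. Qed.

Lemma metal_mono1 p k : 5 <= p -> metal p k <= metal p k.+1.
Proof.
move=> hp; elim: k => [|k IH]; first by rewrite /=; lia.
rewrite metal_SS.
have : 3 * metal p k.+1 <= (p - 2) * metal p k.+1 by apply: leq_mul; lia.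
lia.
Qed.

Lemma metal_rec p k : 5 <= p -> metal p k.+2 + metal p k = (p - 2) * metal p k.+1.
Proof.
move=> hp; rewrite metal_SS.
have h1 := metal_mono1 p k hp.
have : 3 * metal p k.+1 <= (p - 2) * metal p k.+1 by apply: leq_mul; lia.
lia.
Qed.

Lemma metal_mono p i j : 5 <= p -> i <= j -> metal p i <= metal p j.
Proof. move=> hp; apply: (homo_leq (r := leq)) => // [y x z|k]; [exact: leq_trans|exact: metal_mono1]. Qed.

Lemma metal_pos p k : 5 <= p -> 0 < metal p k.
Proof. move=> hp; have := metal_mono p 0 k hp (leq0n k); rewrite /=; lia. Qed.

Fixpoint lv p i (r : seq nat) : nat :=
  if r is a :: r' then a * metal p i + lv p i.+1 r' else 0.

Lemma lv_sum p r i0 : \sum_(i < size r) nth 0 r i * metal p (i + i0) = lv p i0 r.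
Proof.
elim: r i0 => [|a r IH] i0; first by rewrite big_ord0.
rewrite /= big_ord_recl /= add0n; congr (_ + _).
rewrite -IH; apply: eq_bigr => i _; by rewrite /= addnS.
Qed.

Lemma mvalueE p w : mvalue p w = lv p 0 (rev w).
Proof.
rewrite /mvalue -lv_sum size_rev; apply: eq_bigr => i _; by rewrite addn0.
Qed.

Lemma lv_rcons p i r a : lv p i (rcons r a) = lv p i r + a * metal p (i + size r).
Proof.
elim: r i => [|b r IH] i /=; first by rewrite !addn0 add0n.
by rewrite IH addnA addnS.
Qed.

Lemma mvalue_cons p a y : mvalue p (a :: y) = a * metal p (size y) + mvalue p y.
Proof. by rewrite !mvalueE rev_cons lv_rcons size_rev addnC. Qed.

Lemma mvalue_rcons p w a : mvalue p (rcons w a) = mvalue p (rcons w 0) + a.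
Proof. by rewrite !mvalueE !rev_rcons /= mul0n muln1 add0n addnC. Qed.

Lemma lv_shift p i r : 5 <= p -> lv p i.+2 r + lv p i r = (p - 2) * lv p i.+1 r.
Proof.
move=> hp; elim: r i => [|a r IH] i /=; first by rewrite muln0.
have := IH i.+1; have := metal_rec p i hp.
rewrite mulnDr; set A := lv p i.+3 r; set B := lv p i.+2 r.
move=> h1 h2.
have -> : (p - 2) * (a * metal p i.+1) = a * ((p-2) * metal p i.+1) by rewrite mulnCA.
rewrite -h1 -h2 mulnDr. lia.
Qed.

Lemma mvalue_shift p y a : 5 <= p ->
  mvalue p (rcons (rcons y a) 0) + mvalue p y = (p - 2) * mvalue p (rcons y a).
Proof.
move=> hp; rewrite !mvalueE !rev_rcons /= !mul0n !add0n muln1.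
have := lv_shift p 0 (rev y) hp.
rewrite mulnDr. lia.
Qed.

Lemma mvalue_nil0 p : mvalue p [:: 0] = 0.
Proof. by rewrite mvalueE. Qed.

Definition startDC p (y : seq nat) := exists j, prefix (nseq j (p-4) ++ [:: p-3]) y.

Fixpoint Nb p k := if k is k'.+1 then (p-4) * metal p k' + Nb p k' else 0.

Lemma metal_Nb p k : 5 <= p -> metal p k.+1 = (p-3) * metal p k + Nb p k + 1.
Proof.
move=> hp; elim: k => [|k IH]; first by rewrite /=; lia.
have h := metal_rec p k hp. rewrite [Nb p k.+1]/=.
have h2 := metal_mono1 p k hp.
rewrite -/(Nb p k).
have e : (p-2) * metal p k.+1 = (p-3) * metal p k.+1 + metal p k.+1.
  by rewrite -[X in _ + X]mul1n -mulnDl; congr (_ * _); lia.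
have e2 : (p-3) * metal p k = (p-4) * metal p k + metal p k.
  by rewrite -[X in _ + X]mul1n -mulnDl; congr (_ * _); lia.
lia.
Qed.

Lemma nf_cons p a y : ~ has_forbidden p (a :: y) -> ~ has_forbidden p y.
Proof. move=> h [j hj]; apply: h; exists j; by rewrite /= hj orbT. Qed.
Arguments nf_cons {p a y}.

Lemma bound p x : 5 <= p -> all (fun a => a <= p - 3) x -> ~ has_forbidden p x ->
  mvalue p x < metal p (size x) /\ (~ startDC p x -> mvalue p x <= Nb p (size x)).
Proof.
move=> hp; elim: x => [|a y IH]; first by rewrite /mvalue big_ord0.
move=> /andP [ha hy] hf; change (size (a :: y)) with (size y).+1.
have [IH1 IH2] := IH hy (nf_cons hf).
have hm := metal_Nb p (size y) hp.
rewrite mvalue_cons; split.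
- case: (ltngtP a (p-3)) => [hlt|hgt|heq].
  + have : a.+1 * metal p (size y) <= (p-3) * metal p (size y) by apply: leq_mul.
    rewrite mulSn; move: IH1; lia.
  + exfalso; lia.
  + rewrite heq.
    have : ~ startDC p y.
      move=> [j hj]; apply: hf; exists j; by rewrite /= heq eqxx hj.
    move/IH2; lia.
- move=> hs.
  have hne : a != p - 3.
    apply/eqP => e; apply: hs; exists 0; rewrite e /=. apply/andP; split; [exact: eqxx | by case: (y)].
  case: (ltngtP a (p-4)) => [hlt|hgt|heq].
  + have : a.+1 * metal p (size y) <= (p-4) * metal p (size y) by apply: leq_mul.
    rewrite mulSn [Nb p (size y).+1]/=; move: IH1; lia.
  + exfalso; move: hne ha hgt; lia.
  + rewrite heq.
    have : ~ startDC p y.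
      move=> [j hj]; apply: hs; exists j.+1; by rewrite /= heq eqxx hj.
    move/IH2; rewrite [Nb p (size y).+1]/=; lia.
Qed.
Arguments bound {p x}.

Lemma uniq_size p x y : 5 <= p -> size x = size y ->
  all (fun a => a <= p - 3) x -> ~ has_forbidden p x ->
  all (fun a => a <= p - 3) y -> ~ has_forbidden p y ->
  mvalue p x = mvalue p y -> x = y.
Proof.
move=> hp; elim: x y => [|a x IH] [|b y] //= [hs] /andP [ha hx] hfx /andP [hb hy] hfy.
rewrite !mvalue_cons -hs => e.
have [h1 _] := bound hp hx (nf_cons hfx).
have [h2 _] := bound hp hy (nf_cons hfy).
rewrite -hs in h2.
have ab : a = b.
  case: (ltngtP a b) => [hlt|hlt|//].
  + have : a.+1 * metal p (size x) <= b * metal p (size x) by apply: leq_mul.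
    rewrite mulSn; lia.
  + have : b.+1 * metal p (size x) <= a * metal p (size x) by apply: leq_mul.
    rewrite mulSn; lia.
subst b; congr (_ :: _); apply: IH => //; first exact: (nf_cons hfx).
  exact: (nf_cons hfy).
lia.
Qed.
Arguments uniq_size {p x y}.

Lemma lower p (a : nat) (x : seq nat) : 5 <= p -> a != 0 -> metal p (size x) <= mvalue p (a :: x).
Proof.
move=> hp ha; rewrite mvalue_cons.
have : 1 * metal p (size x) <= a * metal p (size x) by apply: leq_mul => //; rewrite lt0n.
lia.
Qed.

Lemma mcode_uniq p n x y : 5 <= p -> is_mcode p n x -> is_mcode p n y -> x = y.
Proof.
move=> hp [hx hhx hvx hfx] [hy hhy hvy hfy].
case: x hx hhx hvx hfx => [|a x] hx hhx hvx hfx;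
  case: y hy hhy hvy hfy => [|b y] hy hhy hvy hfy //.
- exfalso; move: hhy => /= hhy; have := lower p b y hp hhy; have := metal_pos p (size y) hp.
  rewrite hvy -hvx /mvalue big_ord0; lia.
- exfalso; move: hhx => /= hhx; have := lower p a x hp hhx; have := metal_pos p (size x) hp.
  rewrite hvx -hvy /mvalue big_ord0; lia.
move: hhx hhy => /= hhx hhy.
have [bx _] := bound hp hx hfx.
have [byy _] := bound hp hy hfy.
have lx := lower p a x hp hhx. have ly := lower p b y hp hhy.
apply: (uniq_size hp _ hx hfx hy hfy); last by rewrite hvx hvy.
congr (_.+1).
change (size (a :: x)) with (size x).+1 in bx.
change (size (b :: y)) with (size y).+1 in byy.
case: (ltngtP (size x) (size y)) => [hlt|hlt|//]; exfalso.
- have := metal_mono p (size x).+1 (size y) hp hlt. lia.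
- have := metal_mono p (size y).+1 (size x) hp hlt. lia.
Qed.

Definition Bc p n := count id (take n (build p n)).

Lemma nb_ge2 p b : 5 <= p -> 2 <= nb_sons p b.
Proof. move=> hp; case: b => /=; lia. Qed.

Lemma size_sons p b : size (sons_colors p b) = nb_sons p b.
Proof. by rewrite /sons_colors size_map size_iota. Qed.

Lemma count_sons p b : 5 <= p -> count id (sons_colors p b) = 1.
Proof.
move=> hp; rewrite /sons_colors count_map.
have h := nb_ge2 p b hp.
have -> : count (preim (fun i => i == nb_sons p b - 2) id) (iota 0 (nb_sons p b))
   = count_mem (nb_sons p b - 2) (iota 0 (nb_sons p b)) by [].
rewrite count_uniq_mem ?iota_uniq // mem_iota; lia.
Qed.

Lemma build_cat p k k' : k <= k' -> exists r, build p k' = build p k ++ r.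
Proof.
elim: k' => [|k' IH]; first by rewrite leqn0 => /eqP ->; exists [::]; rewrite cats0.
rewrite leq_eqVlt => /orP [/eqP ->|]; first by exists [::]; rewrite cats0.
move=> /IH [r hr]; exists (r ++ sons_colors p (nth false (build p k') k')).
by rewrite /= hr catA.
Qed.

Lemma size_build p k : 5 <= p -> k < size (build p k).
Proof.
move=> hp; elim: k => [|k IH] //=.
rewrite size_cat size_sons; have := nb_ge2 p (nth false (build p k) k) hp; lia.
Qed.

Lemma count_build p k : 5 <= p -> count id (build p k) = k.
Proof.
move=> hp; elim: k => [|k IH] //=.
by rewrite count_cat IH count_sons // addn1.
Qed.

Lemma nth_stable p k k' j : j < size (build p k) -> k <= k' ->
  nth false (build p k') j = nth false (build p k) j.
Proof. move=> hj /(build_cat p k k') [r ->]; by rewrite nth_cat hj. Qed.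

Lemma black_pred p k : 5 <= p -> is_black p k.+1 = nth false (build p k) k.
Proof. move=> hp; rewrite /is_black -pred_Sn; apply: (nth_stable p k k.+1 k) => //; exact: size_build. Qed.

Lemma size_buildS p k : 5 <= p -> size (build p k.+1) = size (build p k) + nsons p k.+1.
Proof. move=> hp; by rewrite /= size_cat size_sons /nsons black_pred. Qed.

Lemma Bc_S p n : 5 <= p -> Bc p n.+1 = Bc p n + is_black p n.+1.
Proof.
move=> hp; rewrite /Bc.
have [r hr] := build_cat p n n.+1 (leqnSn n).
have hs := size_build p n hp.
rewrite hr takel_cat // (take_nth false) // -cats1 count_cat /= addn0.
by rewrite black_pred.
Qed.

Lemma Bc_size p m : 5 <= p -> Bc p (size (build p m)) = m.
Proof.
move=> hp; rewrite /Bc.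
have [r hr] := build_cat p m (size (build p m)) (ltnW (size_build p m hp)).
by rewrite hr take_size_cat // count_build.
Qed.

Lemma T_F p m : 5 <= p -> (size (build p m)).+1 + Bc p m = (p - 2) * m + 2.
Proof.
move=> hp; elim: m => [|m IH]; first by rewrite /Bc /= muln0.
rewrite size_buildS // Bc_S // /nsons.
case: (is_black p m.+1) IH => /=; rewrite mulnS; lia.
Qed.

Lemma T_col p m i : 5 <= p -> 1 <= i <= nsons p m.+1 ->
  is_black p (size (build p m) + i) = (i == nsons p m.+1 - 1).
Proof.
move=> hp /andP [h1 h2].
have hm := size_build p m hp.
have hk := nb_ge2 p (is_black p m.+1) hp.
have hs : size (build p m.+1) = size (build p m) + nsons p m.+1 by rewrite size_buildS.
rewrite [is_black p (_ + _)]/is_black (nth_stable p m.+1 (size (build p m) + i)); last lia; last first.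
  rewrite hs; lia.
rewrite /= nth_cat ifN; last lia.
have -> : (size (build p m) + i).-1 - size (build p m) = i.-1 by lia.
rewrite /sons_colors (nth_map 0); last by rewrite size_iota -black_pred //; rewrite /nsons in h2; lia.
rewrite nth_iota; last by rewrite -black_pred //; rewrite /nsons in h2; lia.
rewrite -black_pred // -/(nsons p m.+1) add0n.
rewrite /nsons in hk *.
by apply/eqP/eqP; lia.
Qed.

Lemma T_B p m i : 5 <= p -> i <= nsons p m.+1 ->
  Bc p (size (build p m) + i) = m + (nsons p m.+1 - 1 <= i).
Proof.
move=> hp; have hk := nb_ge2 p (is_black p m.+1) hp.
rewrite /nsons in hk *.
elim: i => [|i IH] hi.
- rewrite addn0 Bc_size //; have -> : (nb_sons p (is_black p m.+1) - 1 <= 0) = false by lia.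
  by rewrite addn0.
- rewrite addnS Bc_S // IH; last lia.
  rewrite -addnS T_col; last (rewrite /nsons; lia); last done.
  rewrite /nsons.
  set k := nb_sons p (is_black p m.+1).
  case: (ltngtP i.+1 (k - 1)) => h.
  + have e1 : (k - 1 <= i) = false by lia.
    have e2 : (k - 1 <= i.+1) = false by lia.
    by rewrite ?e1 ?e2 /= ?addn0.
  + have e1 : (k - 1 <= i) = true by lia.
    have e2 : (k - 1 <= i.+1) = true by lia.
    by rewrite ?e1 ?e2 /= ?addn0.
  + have e1 : (k - 1 <= i) = false by lia.
    by rewrite e1 /= addn0.
Qed.

Lemma parent p n : 5 <= p -> 2 <= n -> exists m, size (build p m) < n <= size (build p m.+1).
Proof.
move=> hp hn.
suff : forall k, n <= size (build p k) -> exists m, size (build p m) < n <= size (build p m.+1).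
  move=> H; apply: (H n); have := size_build p n hp; lia.
elim=> [|k IH] hk; first by move: hk; rewrite /=; lia.
case: (leqP n (size (build p k))) => h; first exact: IH.
by exists k; rewrite h hk.
Qed.

Definition endsDC p (x : seq nat) := startDC p (rev x).

Definition Inv p n (x : seq nat) :=
  [/\ mvalue p (rcons x 0) + Bc p n = (p - 2) * n,
      (0 < n -> x != [::] /\ ((last 0 x == 0) = is_black p n))
    & (endsDC p x -> is_black p n.+1)].

Lemma endsDC_rcons p (x : seq nat) (a : nat) : endsDC p (rcons x a) -> a = p - 3 \/ (a = p - 4 /\ endsDC p x).
Proof.
rewrite /endsDC rev_rcons => [[j hj]].
case: j hj => [|j] /= /andP [/eqP e h]; first by left.
by right; split => //; exists j.
Qed.

Lemma rev_pal p j : rev ((p - 3) :: nseq j (p - 4) ++ [:: p - 3]) = (p - 3) :: nseq j (p - 4) ++ [:: p - 3].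
Proof. by rewrite rev_cons rev_cat rev_nseq /= -cats1. Qed.

Lemma forb_rcons p (x : seq nat) (a : nat) : has_forbidden p (rcons x a) ->
  has_forbidden p x \/ (a = p - 3 /\ endsDC p x).
Proof.
move=> [j hj]; move: hj; rewrite -infix_rev rev_rcons rev_pal /= => /orP [/andP [/eqP e h]|h].
- by right; split => //; exists j.
- by left; exists j; rewrite -infix_rev rev_pal.
Qed.

Lemma nsonsE p m : nsons p m = if is_black p m then p - 3 else p - 2.
Proof. by []. Qed.

Lemma step1 p m w i : 5 <= p -> is_mcode p m w -> Inv p m w -> 1 <= i -> i <= nsons p m.+1 - 2 ->
  is_mcode p (size (build p m) + i) (rcons w i.+1) /\ Inv p (size (build p m) + i) (rcons w i.+1).
Proof.
move=> hp [wa wh wv wf] [w1 w2 w3] hi1 hi2.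
have hF := T_F p m hp.
have hk := nsonsE p m.+1.
have hv : mvalue p (rcons w i.+1) = size (build p m) + i.
  rewrite mvalue_rcons; lia.
have hkb : is_black p m.+1 -> i <= p - 5.
  by move=> hb; move: hi2; rewrite hk hb; lia.
have hkw : i <= p - 4 by move: hi2; rewrite hk; case: ifP => _; lia.
split; first split.
- rewrite all_rcons wa andbT; lia.
- case: (w) wh => [|b w'] //= /orP [//|hb]; by rewrite hb orbT.
- exact: hv.
- move/forb_rcons => [//|[e hd]]; have := hkb (w3 hd); lia.
split.
- have := mvalue_shift p w i.+1 hp; rewrite hv T_B //; last lia.
  have -> : (nsons p m.+1 - 1 <= i) = false by lia.
  rewrite addn0 wv; lia.
- move=> _; split; first by case: (w).
  rewrite last_rcons T_col //; last (apply/andP; split; lia).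
  have -> : (i == nsons p m.+1 - 1) = false by apply/eqP; lia.
  by [].
- move/endsDC_rcons => hd.
  rewrite -addnS T_col //; last (apply/andP; split; lia).
  apply/eqP; case: hd => [e|[e hd]].
  + move: hk; case: ifP => hb hk; first by have := hkb hb; lia.
    lia.
  + have hb := w3 hd; move: hk; rewrite hb => hk; lia.
Qed.

Lemma head_rcons_ne (u : seq nat) a : u != [::] -> (u == [::]) || (head 0 u != 0) ->
  (rcons u a == [::]) || (head 0 (rcons u a) != 0).
Proof. by case: u. Qed.

Lemma step2 p m u : 5 <= p -> is_mcode p m.+1 u -> Inv p m.+1 u ->
  is_mcode p (size (build p m) + (nsons p m.+1 - 1)) (rcons u 0) /\
  Inv p (size (build p m) + (nsons p m.+1 - 1)) (rcons u 0).
Proof.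
move=> hp [ua uh uv uf] [u1 u2 u3].
have hF := T_F p m.+1 hp.
have hS := size_buildS p m hp.
have hk2 := nb_ge2 p (is_black p m.+1) hp.
rewrite -/(nsons p m.+1) in hk2.
have [une ul] := u2 (ltn0Sn m).
have hv : mvalue p (rcons u 0) = size (build p m) + (nsons p m.+1 - 1) by lia.
split; first split.
- by rewrite all_rcons ua andbT.
- exact: (head_rcons_ne _ _ une uh).
- exact: hv.
- move/forb_rcons => [//|[e _]]; lia.
split.
- have := mvalue_shift p u 0 hp; rewrite hv T_B //; last lia.
  rewrite leqnn uv; lia.
- move=> _; split; first by case: (u).
  rewrite last_rcons T_col //; last (apply/andP; split; lia).
  by rewrite !eqxx.
- move/endsDC_rcons => [e|[e _]]; lia.
Qed.

Lemma step3 p m u : 5 <= p -> is_mcode p m.+1 u -> Inv p m.+1 u ->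
  is_mcode p (size (build p m) + nsons p m.+1) (rcons u 1) /\
  Inv p (size (build p m) + nsons p m.+1) (rcons u 1).
Proof.
move=> hp [ua uh uv uf] [u1 u2 u3].
have hF := T_F p m.+1 hp.
have hS := size_buildS p m hp.
have hk2 := nb_ge2 p (is_black p m.+1) hp.
rewrite -/(nsons p m.+1) in hk2.
have [une ul] := u2 (ltn0Sn m).
have hv : mvalue p (rcons u 1) = size (build p m) + nsons p m.+1 by rewrite mvalue_rcons; lia.
split; first split.
- rewrite all_rcons ua andbT; lia.
- exact: (head_rcons_ne _ _ une uh).
- exact: hv.
- move/forb_rcons => [//|[e _]]; lia.
split.
- have := mvalue_shift p u 1 hp; rewrite hv T_B //.
  have -> : (nsons p m.+1 - 1 <= nsons p m.+1) = true by lia.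
  rewrite uv; lia.
- move=> _; split; first by case: (u).
  rewrite last_rcons T_col //; last (apply/andP; split; lia).
  have -> : (nsons p m.+1 == nsons p m.+1 - 1) = false by apply/eqP; lia.
  by [].
- move/endsDC_rcons => [e|[e hd]]; first lia.
  have hb := u3 hd.
  have -> : (size (build p m) + nsons p m.+1).+1 = size (build p m.+1) + 1 by lia.
  rewrite T_col //; last first.
    apply/andP; split => //; have := nb_ge2 p (is_black p m.+2) hp; rewrite /nsons; lia.
  rewrite nsonsE hb; apply/eqP; lia.
Qed.

Lemma base0 p : 5 <= p -> is_mcode p 0 [::] /\ Inv p 0 [::].
Proof.
move=> hp; split; first split => //.
- by rewrite /mvalue big_ord0.
- by move=> [j]; rewrite /=.
split => //.
- by rewrite mvalue_nil0 /Bc /= muln0.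
- by move=> [j]; rewrite /= ; case: j.
Qed.

Lemma base1 p : 5 <= p -> is_mcode p 1 [:: 1] /\ Inv p 1 [:: 1].
Proof.
move=> hp; split; first split.
- by rewrite /= andbT; lia.
- by [].
- by rewrite mvalueE /= muln1.
- move=> [j]; rewrite /=; case: j => [|j] /=.
  + by have -> : (p - 3 == 1) = false by apply/eqP; lia.
  + by rewrite andbF.
split => //.
- rewrite mvalueE /Bc /= take0 /=; lia.
- move=> [j]; rewrite /= ; case: j => [|j] /=.
  + move/andP => [/eqP e _]; lia.
  + by case: j => [|j] /=; rewrite andbF.
Qed.

Lemma exists_code p n : 5 <= p -> exists x, is_mcode p n x /\ Inv p n x.
Proof.
move=> hp; elim/ltn_ind: n => n IH.
case: n IH => [|[|n]] IH; first by exists [::]; exact: base0.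
  by exists [:: 1]; exact: base1.
have [m /andP [h1 h2]] := parent p n.+2 hp (isT : 1 < n.+2).
have hm := size_build p m hp.
have [w [wc wi]] := IH m ltac:(lia).
have [u [uc ui]] := IH m.+1 ltac:(lia).
have hS := size_buildS p m hp.
set i := n.+2 - size (build p m).
have -> : n.+2 = size (build p m) + i by rewrite /i; lia.
have hk2 := nb_ge2 p (is_black p m.+1) hp; rewrite -/(nsons p m.+1) in hk2.
case: (ltnP i (nsons p m.+1 - 1)) => hi.
- exists (rcons w i.+1); apply: step1 => //; rewrite /i; lia.
case: (ltnP i (nsons p m.+1)) => hi'.
- have -> : i = nsons p m.+1 - 1 by lia.
  exists (rcons u 0); exact: step2.
- have -> : i = nsons p m.+1 by rewrite /i; lia.
  exists (rcons u 1); exact: step3.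
Qed.

Lemma inv_of p n x : 5 <= p -> is_mcode p n x -> Inv p n x.
Proof.
move=> hp hx; have [y [hy iy]] := exists_code p n hp.
by rewrite (mcode_uniq p n x y hp hx hy).
Qed.

Theorem lemma5 (p : nat) (hp : 5 <= p) (nu : nat) (hnu : 1 <= nu)
  (u w : seq nat) (hu : is_mcode p nu u) (hw : is_mcode p nu.-1 w) :
  (is_black p nu ->
     [/\ signature u = 0 /\ nsons p nu = p - 3,
         (forall h, 1 <= h <= p - 5 -> is_mcode p (son p nu h) (rcons w h.+1)),
         is_mcode p (son p nu (p - 4)) (rcons u 0),
         is_mcode p (son p nu (p - 3)) (rcons u 1)
       & is_black p (son p nu (p - 4))])
  /\
  (~~ is_black p nu ->
     [/\ signature u != 0 /\ nsons p nu = p - 2,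
         (forall h, 1 <= h <= p - 4 -> is_mcode p (son p nu h) (rcons w h.+1)),
         is_mcode p (son p nu (p - 3)) (rcons u 0),
         is_mcode p (son p nu (p - 2)) (rcons u 1)
       & is_black p (son p nu (p - 3))]).
Proof.
case: nu hnu hu hw => [//|m] _ hu hw.
rewrite /= in hw.
have iu := inv_of p m.+1 u hp hu.
have iw := inv_of p m w hp hw.
have hson : forall h, 1 <= h -> son p m.+1 h = size (build p m) + h.
  by move=> h h1; rewrite /son /first_son /=; lia.
have [_ hu2 _] := iu.
have [_ hl] := hu2 (ltn0Sn m).
have hk := nsonsE p m.+1.
split => hb.
- have hk' : nsons p m.+1 = p - 3 by rewrite hk hb.
  split.
  + split => //; rewrite /signature; apply/eqP; by rewrite hl.
  + move=> h /andP [h1 h2]; rewrite hson //.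
    by case: (step1 p m w h hp hw iw h1 ltac:(lia)).
  + rewrite hson; last lia.
    have -> : p - 4 = nsons p m.+1 - 1 by lia.
    by case: (step2 p m u hp hu iu).
  + rewrite hson; last lia.
    rewrite -hk'.
    by case: (step3 p m u hp hu iu).
  + rewrite hson; last lia.
    rewrite T_col //; last (apply/andP; split; lia).
    apply/eqP; lia.
- have hb' : is_black p m.+1 = false by apply/negbTE.
  have hk' : nsons p m.+1 = p - 2 by rewrite hk hb'.
  split.
  + split => //; rewrite /signature hl; exact: hb.
  + move=> h /andP [h1 h2]; rewrite hson //.
    by case: (step1 p m w h hp hw iw h1 ltac:(lia)).
  + rewrite hson; last lia.
    have -> : p - 3 = nsons p m.+1 - 1 by lia.
    by case: (step2 p m u hp hu iu).
  + rewrite hson; last lia.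
    rewrite -hk'.
    by case: (step3 p m u hp hu iu).
  + rewrite hson; last lia.
    rewrite T_col //; last (apply/andP; split; lia).
    apply/eqP; lia.
Qed.
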